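(* Let $R$ be a generalized p.q.-Baer $*$-ring and $x\in R$. Then there exist a central projection $e\in R$ and $n\in\mathbb N$ such that (1) $x^ne=x^n$, and (2) for every $y\in R$, $(xR)^ny=\{0\}$ if and only if $ey=0$.
   Context: A $*$-ring is a ring with an involution; a projection is $e$ with $e=e^*=e^2$; a central projection is a projection commuting with all elements. $r_R(S)=\{a\in R: sa=0\ \forall s\in S\}$. A $*$-ring $R$ is a generalized p.q.-Baer $*$-ring if for every $x\in R$ there are $n\in\mathbb N$ and a projection $e$ with $r_R((xR)^n)=eR$ (equivalently, for every principal ideal $I$, $r_R(I^n)=eR$ for some $n$ and projection $e$). *)

(* Defs.v *)
From HB Require Import structures.
From mathcomp Require Import all_boot all_order all_algebra.
Set Implicit Arguments. Unset Strict Implicit. Unset Printing Implicit Defensive.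
Import GRing.Theory.
Local Open Scope ring_scope.

Definition involution (R : ringType) (star : R -> R) : Prop :=
  [/\ forall a b : R, star (a + b) = star a + star b,
      forall a b : R, star (a * b) = star b * star a
    & forall a : R, star (star a) = a].

Definition projection (R : ringType) (star : R -> R) (e : R) : Prop :=
  e = star e /\ e * e = e.

Definition central (R : ringType) (e : R) : Prop :=
  forall a : R, e * a = a * e.

(* Elements of (xR)^n are the products (x r_1)(x r_2)...(x r_n).
   [annih_pow x n a] : a belongs to r_R((xR)^n), i.e. (xR)^n a = {0}. *)
Definition annih_pow (R : ringType) (x : R) (n : nat) (a : R) : Prop :=
  forall r : 'I_n -> R, (\prod_(i < n) (x * r i)) * a = 0.

Definition gen_pq_baer (R : ringType) (star : R -> R) : Prop :=
  forall x : R, exists n : nat, exists e : R,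
    (0 < n)%N /\ projection star e /\
    (forall a : R, annih_pow x n a <-> exists b : R, a = e * b).

(* Main.v *)
Require Import Defs.
From mathcomp Require Import all_boot all_order all_algebra.
Local Open Scope ring_scope.
Import GRing.Theory.

Lemma annih_mull (R : ringType) (x : R) (n : nat) (a r : R) :
  (0 < n)%N -> annih_pow x n a -> annih_pow x n (r * a).
Proof.
case: n => [//|m] _ H rr.
pose r' := fun i : 'I_m.+1 => if i == ord_max then rr i * r else rr i.
have H' := H r'. rewrite big_ord_recr /= in H'. rewrite big_ord_recr /=.
rewrite /r' eqxx in H'.
have Eq : \prod_(i < m) (x * (if widen_ord (leqnSn m) i == ord_max then rr (widen_ord (leqnSn m) i) * r else rr (widen_ord (leqnSn m) i)))
   = \prod_(i < m) (x * rr (widen_ord (leqnSn m) i)).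
  apply: eq_bigr => i _.
  have -> : (widen_ord (leqnSn m) i == ord_max) = false.
    apply/negbTE; apply/eqP => /(congr1 val) /= E.
    by move: (ltn_ord i); rewrite E ltnn.
  by [].
rewrite Eq in H'. by rewrite !mulrA -H' !mulrA.
Qed.

Theorem mainTheorem4 (R : ringType) (star : R -> R)
  (Hstar : involution star) (HR : gen_pq_baer star) (x : R) :
  exists e : R, exists n : nat,
    [/\ projection star e, central e, (0 < n)%N,
        x ^+ n * e = x ^+ n
      & forall y : R, annih_pow x n y <-> e * y = 0].
Proof.
case: Hstar => sD sM sK.
have [n [f [n0 [[fs ff] Hf]]]] := HR x.
have s0 : star 0 = 0.
  have h := sD 0 0; rewrite addr0 in h.
  by apply: (addrI (star 0)); rewrite addr0 -h.
have sN : forall a, star (- a) = - star a.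
  by move=> a; apply/eqP; rewrite -subr_eq0 opprK -sD addNr s0.
have s1 : star 1 = 1.
  transitivity (star 1 * star (star 1)); first by rewrite sK mulr1.
  by rewrite -sM mulr1 sK.
have fR : forall r, r * f = f * r * f.
  move=> r; have [b Hb] : exists b, r * f = f * b.
    apply/Hf; apply: annih_mull => //; apply/Hf; exists 1; by rewrite mulr1.
  by rewrite -mulrA Hb mulrA ff.
have fc : forall r, f * r = r * f.
  move=> r.
  have h1 := fR (star r).
  have h2 : star (star r * f) = star (f * star r * f) by rewrite h1.
  rewrite !sM sK -fs in h2.
  by rewrite h2 mulrA -fR.
have xf : x ^+ n * f = 0.
  have : annih_pow x n f by apply/Hf; exists 1; rewrite mulr1.
  move=> /(_ (fun _ => 1)).
  under eq_bigr do rewrite mulr1.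
  by rewrite prodr_const card_ord.
exists (1 - f), n; split => //.
- split; first by rewrite sD sN s1 -fs.
  by rewrite mulrBr mulr1 mulrBl mul1r ff subrr subr0.
- by move=> a; rewrite mulrBl mulrBr mul1r mulr1 fc.
- by rewrite mulrBr mulr1 xf subr0.
- move=> y; rewrite mulrBl mul1r; split.
    by move/Hf => [b ->]; rewrite mulrA ff subrr.
  by move/eqP; rewrite subr_eq0 => /eqP E; apply/Hf; exists y.
Qed.
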